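(* Let $p$ be an odd prime and $\alpha$ an indeterminate over $\mathbb F_p$. Then \[ \prod_{s=1}^{p-2}b_{1,s}(\alpha)=\prod_{k=2}^{p-1}(1+\alpha/k)^{k-1}=\frac{L_{p-1}^{(\alpha^p)}(\alpha^p-\alpha)}{1-\alpha^{p-1}}, \] where $L_{p-1}^{(\alpha^p)}(\alpha^p-\alpha)$ is obtained from $L_{p-1}^{(\alpha)}(X)$ by substituting $\alpha^p$ for $\alpha$ and $\alpha^p-\alpha$ for $X$.
   Context: $\mathbb F_p$ is the field of $p$ elements, $\binom{x}{m}=x(x-1)\cdots(x-m+1)/m!$. $L_{p-1}^{(\alpha)}(X)=\sum_{k=0}^{p-1}\binom{\alpha-1}{p-1-k}\frac{(-X)^k}{k!}\in\mathbb F_p[\alpha,X]$. For integers $0<r,s<p$ (interpreted as elements of $\mathbb F_p$), $b_{r,s}(\alpha)=\sum_{k=0}^{p-1}(-r/s)^k\binom{r\alpha-1}{p-1-k}\binom{s\alpha-1}{k}\in\mathbb F_p[\alpha]$. *)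

(* Defs.v *)
From HB Require Import structures.
From mathcomp Require Import all_boot all_order all_algebra.
Set Implicit Arguments. Unset Strict Implicit. Unset Printing Implicit Defensive.
Import GRing.Theory.
Local Open Scope ring_scope.

Definition pbinom (F : fieldType) (x : {poly F}) (m : nat) : {poly F} :=
  ((m`!)%:R^-1) *: \prod_(i < m) (x - (i%:R)%:P).

(* L_{p-1}^{(a)}(X) = sum_{k=0}^{p-1} binom(a-1, p-1-k) (-X)^k / k!,
   given as a function of the two polynomials substituted for alpha and X. *)
Definition laguerre (p : nat) (a X : {poly 'F_p}) : {poly 'F_p} :=
  \sum_(k < p) pbinom (a - 1) (p.-1 - k) * (((k`!)%:R^-1) *: (- X) ^+ k).

Definition bpoly (p r s : nat) : {poly 'F_p} :=
  \sum_(k < p) (- (r%:R : 'F_p) / s%:R) ^+ k *: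
     (pbinom (r%:R *: 'X - 1) (p.-1 - k) * pbinom (s%:R *: 'X - 1) k).

(* Main.v *)
Require Import Defs.
From HB Require Import structures.
From mathcomp Require Import all_boot all_order all_algebra.
From mathcomp Require Import finfield.
From mathcomp Require Import zify ring.
Set Implicit Arguments. Unset Strict Implicit. Unset Printing Implicit Defensive.
Import GRing.Theory.
Local Open Scope ring_scope.

Section P16.
Variable p : nat.
Hypothesis hp : prime p.
Hypothesis hodd : odd p.
Local Notation F := 'F_p.
Local Notation P := {poly 'F_p}.

Lemma p_gt1 : (1 < p)%N. Proof. exact: prime_gt1. Qed.

Lemma natFp_eq0 n : ((n%:R : F) == 0) = (p %| n)%N.
Proof. by rewrite -val_eqE /= val_Fp_nat. Qed.

Lemma natFp_neq0 n : (0 < n < p)%N -> (n%:R : F) != 0.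
Proof.
move=> /andP[h1 h2]; rewrite natFp_eq0; apply/negP => /dvdn_leq.
by move=> /(_ h1); rewrite leqNgt h2.
Qed.

Lemma natFp_inj m n : (m < p)%N -> (n < p)%N -> (m%:R : F) = n%:R -> m = n.
Proof.
move=> hm hn /(congr1 val) /=; rewrite !val_Fp_nat // !modn_small //.
Qed.

Lemma fact_neq0 n : (n < p)%N -> (n`!%:R : F) != 0.
Proof.
elim: n => [|n IH] h; first by rewrite fact0 oner_neq0.
by rewrite factS natrM mulf_neq0 ?IH ?natFp_neq0 //; lia.
Qed.

Lemma pF0 : (p%:R : F) = 0.
Proof. exact: pchar_Fp_0. Qed.

Lemma natFpB n : (n <= p)%N -> ((p - n)%:R : F) = - n%:R.
Proof. by move=> h; rewrite natrB // pF0 sub0r. Qed.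

Lemma fermatF (x : F) : x ^+ p = x.
Proof. by rewrite -{2}(expf_card x) card_Fp. Qed.



Lemma pbinom_horner (x : P) m (a : F) :
  (pbinom x m).[a] = (m`!%:R)^-1 * \prod_(i < m) (x.[a] - i%:R).
Proof.
rewrite /pbinom hornerZ horner_prod; congr (_ * _); apply: eq_bigr => i _.
by rewrite hornerD hornerN hornerC.
Qed.

Lemma prod_ord_zero n (G : 'I_n -> F) j (hj : (j < n)%N) :
  G (Ordinal hj) = 0 -> \prod_(i < n) G i = 0.
Proof. by move=> H; rewrite (bigD1 (Ordinal hj)) //= H mul0r. Qed.

Lemma prod_m1 m : \prod_(i < m) (-1 - i%:R : F) = (-1) ^+ m * m`!%:R.
Proof.
elim: m => [|m IH]; first by rewrite big_ord0 expr0 fact0 mulr1.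
rewrite big_ord_recr /= IH factS natrM exprS -natr1.
ring.
Qed.

Lemma pbinom_m1 (r : F) m : (m < p)%N -> (pbinom (r *: 'X - 1) m).[0] = (-1) ^+ m.
Proof.
move=> hm; rewrite pbinom_horner.
have -> : (r *: 'X - 1 : P).[0] = -1 by rewrite hornerD hornerN hornerZ hornerX hornerC mulr0 add0r.
rewrite prod_m1 mulrCA mulVf ?mulr1 //; exact: fact_neq0.
Qed.

Lemma predp_cast : ((p.-1)%:R : F) = -1.
Proof.
have : ((p.-1).+1%:R : F) = 0 by rewrite prednK ?pF0 // prime_gt0.
by rewrite -natr1 => /eqP; rewrite addr_eq0 => /eqP.
Qed.

Lemma geom_p (c : F) : c != 1 -> \sum_(k < p) c ^+ k = 1.
Proof.
move=> hc; have := subrX1 c p; rewrite fermatF => h.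
have hc1 : c - 1 != 0 by rewrite subr_eq0.
by apply: (mulfI hc1); rewrite -h mulr1.
Qed.

Lemma cst_neq1 s : (1 <= s)%N -> (s < p.-1)%N -> (- (1%:R : F) / s%:R) != 1.
Proof.
move=> h1 h2; have hs : (s%:R : F) != 0 by apply: natFp_neq0; lia.
apply/eqP => /(congr1 (fun x => x * s%:R)); rewrite mulfVK // mul1r => /eqP.
rewrite eq_sym -subr_eq0 opprK -natr1 addrC => /eqP; apply/eqP.
by rewrite add0r addrC natr1; apply: natFp_neq0; lia.
Qed.

Lemma bpoly_at0 s : (1 <= s)%N -> (s < p.-1)%N -> (bpoly p 1 s).[0] = 1.
Proof.
move=> h1 h2; rewrite /bpoly horner_sum.
have hp0 := prime_gt0 hp.
rewrite -[RHS](geom_p (cst_neq1 h1 h2)); apply: eq_bigr => k _.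
rewrite hornerZ hornerM !pbinom_m1 ?(ltn_ord k) //; last by lia.
rewrite -exprD subnK; last by have := ltn_ord k; lia.
have -> : (-1 : F) ^+ p.-1 = 1.
  have : ~~ odd p.-1 by move: hodd; case: p hp0 => // n _ /=; rewrite negbK.
  by move=> ho; rewrite -signr_odd (negbTE ho).
by rewrite mulr1.
Qed.

Definition mm s a := ((s * a + p.-1) %% p)%N.

Lemma mm_cast s a : ((mm s a)%:R : F) = s%:R * a%:R - 1.
Proof. by rewrite /mm Fp_nat_mod // natrD natrM predp_cast. Qed.

Lemma mm_lt s a : (mm s a < p)%N.
Proof. by rewrite /mm ltn_pmod // prime_gt0. Qed.

Lemma bpoly_root s a : (1 <= a < p)%N -> (a + mm s a < p)%N ->
  root (bpoly p 1 s) (a%:R).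
Proof.
move=> /andP[ha1 ha2] hin; rewrite /root /bpoly horner_sum; apply/eqP.
apply: big1 => k _; rewrite hornerZ hornerM !pbinom_horner.
case: (ltnP (a.-1) (p.-1 - k)) => hk.
  have -> : \prod_(i < p.-1 - k) ((1 *: 'X - 1 : P).[a%:R] - i%:R) = 0.
    apply: (@prod_ord_zero _ (fun i : 'I_(p.-1 - k) => ((1 *: 'X - 1 : P).[a%:R] - i%:R)) _ hk) => /=.
    rewrite hornerD hornerN hornerZ hornerX hornerC mul1r.
    rewrite -[in a%:R](prednK ha1) -natr1; ring.
  by rewrite mulr0 mul0r mulr0.
have hk2 : (mm s a < k)%N by have := ltn_ord k; lia.
have -> : \prod_(i < k) ((s%:R *: 'X - 1 : P).[a%:R] - i%:R) = 0.
  apply: (@prod_ord_zero _ (fun i : 'I_k => ((s%:R *: 'X - 1 : P).[a%:R] - i%:R)) _ hk2) => /=.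
  rewrite hornerD hornerN hornerZ hornerX hornerC mm_cast; ring.
by rewrite !mulr0.
Qed.

Lemma small_mod x y : (x%:R : F) = y%:R -> (y < p)%N -> (x < 2 * p)%N ->
  x = y \/ x = (y + p)%N.
Proof.
move=> hxy hy hx.
have hm : (x %% p = y)%N.
  by have := congr1 val hxy; rewrite /= !val_Fp_nat // (modn_small hy).
have := divn_eq x p; rewrite hm.
case: (x %/ p)%N => [|[|q]] /=; first by rewrite mul0n add0n; left.
  by rewrite mul1n addnC; right.
move=> hx'; exfalso; have : (2 * p <= q.+2 * p)%N by rewrite leq_mul2r; lia.
lia.
Qed.

Lemma mm_ne s a : (1 <= s)%N -> (s < p.-1)%N -> (1 <= a < p)%N -> mm s a != p.-1.
Proof.
move=> h1 h2 ha; apply/eqP => /(congr1 (fun n => (n%:R : F))).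
rewrite mm_cast predp_cast => /eqP; rewrite subr_eq addrC subrr mulf_eq0.
by rewrite (negbTE (natFp_neq0 _)) ?(negbTE (natFp_neq0 _)) //; lia.
Qed.

Lemma mm_ne2 s a : (1 <= s)%N -> (s < p.-1)%N -> (1 <= a < p)%N -> (a + mm s a)%N != p.-1.
Proof.
move=> h1 h2 ha; apply/eqP => /(congr1 (fun n => (n%:R : F))).
rewrite natrD mm_cast predp_cast => H.
have E : ((s.+1)%:R * a%:R : F) = a%:R + (s%:R * a%:R - 1) + 1 by rewrite -natr1; ring.
move: E; rewrite H addNr => /eqP; rewrite mulf_eq0.
by rewrite (negbTE (natFp_neq0 _)) ?(negbTE (natFp_neq0 _)) //; lia.
Qed.

Lemma mm_sum s a : (1 <= s)%N -> (s < p.-1)%N -> (1 <= a < p)%N ->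
  (mm s a + mm s (p - a) = p - 2)%N.
Proof.
move=> h1 h2 ha.
have hc : ((mm s a + mm s (p - a))%:R : F) = (p - 2)%:R.
  rewrite natrD !mm_cast natrB; last by lia.
  rewrite natrB; last by lia.
  rewrite pF0; ring.
have e1 := mm_ne h1 h2 ha.
have e2 : mm s (p - a) != p.-1 by apply: mm_ne => //; lia.
have l1 := mm_lt s a; have l2 := mm_lt s (p - a).
case: (small_mod hc _ _); try lia.
Qed.

Lemma inS_pair s a : (1 <= s)%N -> (s < p.-1)%N -> (1 <= a < p)%N ->
  ((p - a) + mm s (p - a) < p)%N = ~~ (a + mm s a < p)%N.
Proof.
move=> h1 h2 ha.
have := mm_sum h1 h2 ha; have := mm_ne2 h1 h2 ha.
have : (p - a + mm s (p - a))%N != p.-1 by apply: mm_ne2 => //; lia.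
have := mm_lt s a; have := mm_lt s (p - a).
move=> ? ? /eqP ? /eqP ? ?.
apply/idP/idP; lia.
Qed.

Lemma count_sum_nat (T : eqType) (P0 : pred T) (l : seq T) :
  count P0 l = (\sum_(x <- l) P0 x)%N.
Proof. by elim: l => [|x l IH]; rewrite ?big_nil ?big_cons //= IH. Qed.

Lemma sum_lt_ord n K : (K <= n)%N -> (\sum_(i < n) (i < K : nat))%N = K.
Proof.
move=> hK; rewrite -(big_mkord xpredT (fun i => (i < K : nat))).
rewrite (@big_cat_nat _ _ _ K 0 n) //=.
rewrite [X in (_ + X)%N]big1_seq ?addn0; last first.
  by move=> i /andP[_]; rewrite mem_index_iota => /andP[h _]; rewrite ltnNge h.
rewrite (eq_big_nat _ _ (F2 := fun _ => 1%N)); last by move=> i /andP[_ ->].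
by rewrite sum_nat_const_nat subn0 muln1.
Qed.

Lemma mm_inj a : (1 <= a < p)%N -> forall s1 s2, (s1 < p)%N -> (s2 < p)%N ->
  mm s1 a = mm s2 a -> s1 = s2.
Proof.
move=> ha s1 s2 h1 h2 /(congr1 (fun n => (n%:R : F))); rewrite !mm_cast.
move=> /addIr /mulIf; have ha0 : (a%:R : F) != 0 by apply: natFp_neq0.
by move=> /(_ ha0) /natFp_inj; apply.
Qed.

Lemma count_s a : (1 <= a < p)%N ->
  (\sum_(1 <= s < p.-1) (a + mm s a < p : nat))%N = (p.-1 - a)%N.
Proof.
move=> ha; have hp0 := prime_gt0 hp.
have full : (\sum_(0 <= s < p) (mm s a < p - a : nat))%N = (p - a)%N.
  rewrite big_mkord.
  pose h := fun s : 'I_p => Ordinal (mm_lt s a).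
  have hinj : injective h.
    move=> x y /(congr1 val) /= /(mm_inj ha) H; apply: val_inj; apply: H => //.
  transitivity (\sum_(i < p) (i < p - a : nat))%N; last by apply: sum_lt_ord; lia.
  by rewrite [RHS](reindex_inj hinj).
have E : forall G : nat -> nat, (\sum_(1 <= i < p) G i = \sum_(1 <= i < p.-1) G i + G p.-1)%N.
  by move=> G; rewrite -big_nat_recr /= ?prednK //; lia.
move: full; rewrite big_ltn // E.
have -> : mm 0 a = p.-1 by rewrite /mm mul0n add0n modn_small //; lia.
have -> : mm p.-1 a = (p.-1 - a)%N.
  apply: natFp_inj; [exact: mm_lt | lia |].
  rewrite mm_cast natrB; last by lia.
  rewrite predp_cast; ring.
have -> : (p.-1 < p - a)%N = false by apply/negbTE; lia.
have -> : (p.-1 - a < p - a)%N = true by apply/idP; lia.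
move=> H.
rewrite (eq_big_nat _ _ (F2 := fun s => (mm s a < p - a : nat))); first by lia.
by move=> s _; congr nat_of_bool; apply/idP/idP; lia.
Qed.

Lemma count_a s : (1 <= s)%N -> (s < p.-1)%N ->
  (\sum_(1 <= a < p) (a + mm s a < p : nat))%N = p./2.
Proof.
move=> h1 h2; set S := (\sum_(1 <= a < p) _)%N.
have hS : S = (\sum_(1 <= a < p) ((p - a) + mm s (p - a) < p : nat))%N.
  rewrite /S big_nat_rev /=; apply: eq_big_nat => a ha.
  by rewrite add1n subSS.
have : (S + S = p.-1)%N.
  rewrite {2}hS /S -big_split /=.
  rewrite (eq_big_nat _ _ (F2 := fun _ => 1%N)).
    by rewrite sum_nat_const_nat muln1 subn1.
  move=> a ha; rewrite inS_pair //; by case: (_ < p)%N.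
have := odd_double_half p; rewrite hodd /=; lia.
Qed.

Lemma size_lin (r : F) : (size (1 - r^-1 *: 'X : P)%R <= 2)%N.
Proof.
apply: leq_trans (size_polyD _ _) _; rewrite size_polyN geq_max size_poly1 /=.
by apply: leq_trans (size_scale_leq _ _) _; rewrite size_polyX.
Qed.

Lemma poly_from_roots (q : P) (rs : seq F) : uniq rs -> 0 \notin rs ->
  all (root q) rs -> (size q <= (size rs).+1)%N -> q.[0] = 1 ->
  q = \prod_(r <- rs) (1 - r^-1 *: 'X).
Proof.
move=> urs n0 rq sq q0.
set Q := \prod_(r <- rs) _.
have hQ0 : Q.[0] = 1.
  rewrite /Q horner_prod big1_seq // => r _.
  by rewrite hornerD hornerN hornerZ hornerX hornerC mulr0 subr0.
have hQr : all (root Q) rs.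
  apply/allP => r hr; rewrite /Q (big_rem r) //= rootM; apply/orP; left.
  rewrite /root hornerD hornerN hornerZ hornerX hornerC mulVf ?subrr //.
  by apply: contraNneq n0 => <-.
have sQ : (size Q <= (size rs).+1)%N.
  rewrite /Q; elim: (rs) => [|r l IH]; first by rewrite big_nil size_poly1.
  rewrite big_cons; apply: leq_trans (size_polyMleq _ _) _.
  have := size_lin r; move: IH => /= h1 h2.
  rewrite -subn1 leq_subLR; apply: leq_trans (leq_add h2 h1) _; lia.
apply/eqP; rewrite -subr_eq0; apply/eqP.
apply: (@roots_geq_poly_eq0 _ _ (0 :: rs)) => /=.
- rewrite /root hornerD hornerN q0 hQ0 subrr eqxx /=.
  apply/allP => r hr; rewrite /root hornerD hornerN.
  by rewrite (eqP (allP rq r hr)) (eqP (allP hQr r hr)) subrr.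
- by rewrite n0 urs.
- apply: leq_trans (size_polyD _ _) _; rewrite size_polyN geq_max sq sQ //.
Qed.

Definition Eb (b : P) (t : F) : {poly P} := \poly_(k < p) (t ^+ k *: pbinom b k).
Definition Ex (g : P) : {poly P} := \poly_(k < p) ((k`!%:R : F)^-1 *: g ^+ k).

Definition eqm (f g : {poly P}) := forall n, (n < p.-1)%N -> f`_n = g`_n.

Lemma eqm_mulr f g h : eqm f g -> eqm (f * h) (g * h).
Proof.
move=> H n hn; rewrite !coefM; apply: eq_bigr => j _; rewrite H //.
have := ltn_ord j; lia.
Qed.

Lemma coefXd (f : {poly P}) n : ('X * f^`())`_n = f`_n *+ n.
Proof. by case: n => [|n]; rewrite coefXM /= ?coef_deriv ?mulr0n. Qed.

Lemma pbinomS (b : P) n : (n.+1 < p)%N -> pbinom b n.+1 *+ n.+1 = (b - n%:R%:P) * pbinom b n.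
Proof.
move=> hn; rewrite /pbinom big_ord_recr /= -scaler_nat scalerA factS natrM invfM.
rewrite mulrA mulfV ?mul1r; last by apply: natFp_neq0; lia.
by rewrite -scalerAr [X in _ = _ *: X]mulrC.
Qed.

Lemma Eb_ode (b : P) (t : F) : eqm ((1 + (t%:P)%:P * 'X) * (Eb b t)^`()) ((t%:P * b)%:P * Eb b t).
Proof.
move=> n hn; rewrite mulrDl mul1r coefD -mulrA coefCM coefXd coef_deriv coefCM.
rewrite !coef_poly; have -> : (n.+1 < p)%N by lia.
have -> : (n < p)%N by lia.
rewrite [X in X + _]scalerMnr pbinomS; last by lia.
rewrite [X in _ + _ * X]scalerMnr -!mul_polyC -[pbinom b n *+ n]mulr_natr.
rewrite exprS; move: (t ^+ n) (pbinom b n) => T C; ring.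
Qed.


Lemma Ex_ode (g : P) : eqm (Ex g)^`() (g%:P * Ex g).
Proof.
move=> n hn; rewrite coef_deriv coefCM !coef_poly.
have -> : (n.+1 < p)%N by lia.
have -> : (n < p)%N by lia.
rewrite scalerMnl -mulr_natr factS natrM invfM mulrC mulrA mulfV ?mul1r; last by apply: natFp_neq0; lia.
by rewrite exprS scalerAr.
Qed.

Lemma rec_from_eqm (G : {poly P}) (a b c d : P) :
  eqm ((1 + a%:P * 'X + b%:P * 'X^2) * G^`()) ((c%:P + d%:P * 'X) * G) ->
  G`_1 = c * G`_0 /\
  forall n, (n.+2 < p)%N ->
    G`_n.+2 *+ n.+2 + a * (G`_n.+1 *+ n.+1) + b * (G`_n *+ n) = c * G`_n.+1 + d * G`_n.
Proof.
move=> H; have E m : ((1 + a%:P * 'X + b%:P * 'X^2) * G^`())`_m.+1 =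
    G`_m.+2 *+ m.+2 + a * (G`_m.+1 *+ m.+1) + b * (G`_m *+ m).
  rewrite !mulrDl mul1r !coefD -!mulrA !coefCM coefXd coef_deriv.
  by rewrite coefXM /= coefXd.
have E2 m : ((c%:P + d%:P * 'X) * G)`_m.+1 = c * G`_m.+1 + d * G`_m.
  by rewrite mulrDl coefD -mulrA !coefCM coefXM.
split.
  have := H 0%N; rewrite !mulrDl mul1r !coefD -!mulrA !coefCM coefXd coef_deriv.
  rewrite !coefXM /= mulr0n mulr1n !mulr0 !addr0 => -> //.
  have h2 := prime_gt1 hp. have h3 : p != 2%N by apply/eqP => e; move: hodd; rewrite e. lia.
move=> n hn; rewrite -E -E2; apply: H; lia.
Qed.

Lemma size_mulrn_le (x : P) k : (size (x *+ k) <= size x)%N.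
Proof. rewrite -scaler_nat; exact: size_scale_leq. Qed.

Lemma size_mul_le (x y : P) m n :
  (size x <= m.+1)%N -> (size y <= n.+1)%N -> (size (x * y)%R <= (m + n).+1)%N.
Proof.
move=> hx hy; apply: leq_trans (size_polyMleq _ _) _.
rewrite -subn1 leq_subLR; apply: leq_trans (leq_add hx hy) _; lia.
Qed.

Lemma size_add_le (x y : P) m : (size x <= m)%N -> (size y <= m)%N -> (size (x + y)%R <= m)%N.
Proof. by move=> hx hy; apply: leq_trans (size_polyD _ _) _; rewrite geq_max hx hy. Qed.

Lemma size_sub_le (x y : P) m : (size x <= m)%N -> (size y <= m)%N -> (size (x - y)%R <= m)%N.
Proof. by move=> hx hy; apply: size_add_le => //; rewrite size_polyN. Qed.

Lemma size_rec (g : nat -> P) (a b c d : P) (B : nat -> nat) e1 e2 :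
  (size a <= 1)%N -> (size b <= 1)%N -> (size c <= e1.+1)%N -> (size d <= e2.+1)%N ->
  (size (g 0%N) <= 1)%N -> g 1%N = c * g 0%N ->
  (forall n, (n.+2 < p)%N ->
     g n.+2 *+ n.+2 + a * (g n.+1 *+ n.+1) + b * (g n *+ n) = c * g n.+1 + d * g n) ->
  (e1 <= B 1)%N ->
  (forall n, e1 + B n.+1 <= B n.+2)%N -> (forall n, e2 + B n <= B n.+2)%N ->
  (forall n, B n.+1 <= B n.+2)%N -> (forall n, B n <= B n.+2)%N ->
  forall n, (n < p)%N -> (size (g n) <= (B n).+1)%N.
Proof.
move=> ha hb hc hd h0 h1 hr hB1 HB1 HB2 HB3 HB4.
suff K : forall n, (n.+1 < p)%N ->
    (size (g n) <= (B n).+1)%N /\ (size (g n.+1) <= (B n.+1).+1)%N.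
  move=> [|n] hn; first by apply: leq_trans h0 _.
  by case: (K n hn).
elim=> [|n IH] hn.
  split; first by apply: leq_trans h0 _.
  rewrite h1; apply: leq_trans (size_mul_le hc h0) _; lia.
have [i1 i2] := IH (ltnW hn).
split => //.
have eq : g n.+2 = ((n.+2)%:R : F)^-1 *:
    (c * g n.+1 + d * g n - a * (g n.+1 *+ n.+1) - b * (g n *+ n)).
  rewrite -(hr n hn) (_ : forall X A B0 : P, X + A + B0 - A - B0 = X); last by move=> *; ring.
  by rewrite -scaler_nat scalerA mulVf ?scale1r //; apply: natFp_neq0; lia.
rewrite eq; apply: leq_trans (size_scale_leq _ _) _.
have s1 : (size (g n.+1 *+ n.+1) <= (B n.+1).+1)%N by apply: leq_trans (size_mulrn_le _ _) i2.
have s2 : (size (g n *+ n) <= (B n).+1)%N by apply: leq_trans (size_mulrn_le _ _) i1.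
apply: size_sub_le; [apply: size_sub_le; [apply: size_add_le|]|].
- apply: leq_trans (size_mul_le hc i2) _; have := HB1 n; lia.
- apply: leq_trans (size_mul_le hd i1) _; have := HB2 n; lia.
- apply: leq_trans (size_mul_le ha s1) _; have := HB3 n; lia.
- apply: leq_trans (size_mul_le hb s2) _; have := HB4 n; lia.
Qed.

Lemma eqm_add f1 g1 f2 g2 : eqm f1 g1 -> eqm f2 g2 -> eqm (f1 + f2) (g1 + g2).
Proof. by move=> H1 H2 n hn; rewrite !coefD H1 ?H2. Qed.

Lemma pbinom0 (b : P) : pbinom b 0 = 1.
Proof. by rewrite /pbinom big_ord0 fact0 invr1 scale1r. Qed.

Lemma size_lin2 (r : F) : (size (r *: 'X - 1 : P)%R <= 2)%N.
Proof.
apply: size_sub_le; last by rewrite size_poly1.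
by apply: leq_trans (size_scale_leq _ _) _; rewrite size_polyX.
Qed.

Lemma bpoly_size s : (1 <= s)%N -> (s < p.-1)%N -> (size (bpoly p 1 s) <= p./2.+1)%N.
Proof.
move=> h1 h2; have hp0 := prime_gt0 hp.
set t : F := - (1%:R : F) / s%:R.
set b1 : P := (1%:R : F) *: 'X - 1.
set b2 : P := (s%:R : F) *: 'X - 1.
set G := Eb b1 1 * Eb b2 t.
have hs : (s%:R : F) != 0 by apply: natFp_neq0; lia.
have hts : t * s%:R = -1 by rewrite /t mulfVK.
have Gp : G`_p.-1 = bpoly p 1 s.
  rewrite /G coefMr /bpoly prednK //; apply: eq_bigr => j _; rewrite !coef_poly.
  have -> : (p.-1 - j < p)%N by lia.
  have -> : (j < p)%N by exact: ltn_ord.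
  by rewrite expr1n scale1r scalerAr.
have ode : eqm ((1 + ((1 + t)%:P)%:P * 'X + (t%:P)%:P * 'X^2) * G^`())
     (((b1 + t%:P * b2)%:P + (t%:P * (b1 + b2))%:P * 'X) * G).
  have e1 := eqm_mulr ((1 + (t%:P)%:P * 'X) * Eb b2 t) (Eb_ode b1 1).
  have e2 := eqm_mulr ((1 + (1%:P)%:P * 'X) * Eb b1 1) (Eb_ode b2 t).
  have e3 := eqm_add e1 e2.
  move=> n hn.
  have -> : (1 + ((1 + t)%:P)%:P * 'X + (t%:P)%:P * 'X^2) * G^`() =
     (1 + (1%:P)%:P * 'X) * (Eb b1 1)^`() * ((1 + (t%:P)%:P * 'X) * Eb b2 t) +
     (1 + (t%:P)%:P * 'X) * (Eb b2 t)^`() * ((1 + (1%:P)%:P * 'X) * Eb b1 1).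
    rewrite /G derivM; ring.
  rewrite e3 //; apply: (congr1 (fun q : {poly P} => q`_n)); rewrite /G; ring.
have [r1 r2] := rec_from_eqm ode.
have hc : b1 + t%:P * b2 = (- (1 + t))%:P.
  rewrite /b1 /b2 -!mul_polyC.
  have -> : forall u v w : F, u%:P * 'X - 1 + v%:P * (w%:P * 'X - 1) =
      (u + v * w)%:P * 'X - (1 + v)%:P :> P by move=> *; ring.
  by rewrite hts (_ : (1%:R : F) = 1) // subrr mul0r sub0r polyCN.
have := @size_rec (fun n => G`_n) ((1 + t)%:P) (t%:P) (b1 + t%:P * b2) (t%:P * (b1 + b2))
  (fun n => n./2) 0 1 (size_polyC_leq1 _) (size_polyC_leq1 _).
rewrite hc => /(_ (size_polyC_leq1 _)).
have sd : (size (t%:P * (b1 + b2))%R <= 2)%N.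
  exact: (size_mul_le (m := 0) (n := 1) (size_polyC_leq1 t)
    (size_add_le (size_lin2 _) (size_lin2 _))).
move=> /(_ sd).
have g0 : G`_0 = 1 by rewrite /G coef0M !coef_poly hp0 !expr0 !scale1r !pbinom0 mulr1.
rewrite g0 size_poly1 => /(_ isT).
rewrite -hc -g0 => /(_ r1 r2 (leq0n _)).
have hh : forall n, (n./2 <= n.+2./2)%N.
  by move=> n; apply: leq_trans (half_leq (leqnSn n)) (half_leq (leqnSn _)).
move=> /(_ (fun n => half_leq (leqnSn _)) (fun n => leqnn _) (fun n => half_leq (leqnSn _)) hh).
move=> /(_ p.-1); rewrite Gp => H; apply: leq_trans (H _) _; first by lia.
have := odd_double_half p; rewrite hodd => E.
rewrite -{2}E add1n /= -addnn; lia.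
Qed.



Definition Sset s := [seq a <- iota 1 p.-1 | (a + mm s a < p)%N].

Lemma bpoly_fact s : (1 <= s)%N -> (s < p.-1)%N ->
  bpoly p 1 s = \prod_(a <- Sset s) (1 - (a%:R : F)^-1 *: 'X).
Proof.
move=> h1 h2.
rewrite -(big_map (fun a => (a%:R : F)) xpredT (fun r => 1 - r^-1 *: 'X)).
have memS a : a \in Sset s -> (1 <= a < p)%N.
  rewrite mem_filter mem_iota => /andP[_ /andP[ha hb]].
  by rewrite ha /=; move: hb; rewrite add1n prednK // prime_gt0.
apply: poly_from_roots.
- rewrite map_inj_in_uniq ?filter_uniq ?iota_uniq //.
  move=> x y /memS hx /memS hy /natFp_inj; apply; lia.
- apply/mapP => [[a /memS ha /esym h0]]; move: (natFp_neq0 ha); by rewrite h0 eqxx.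
- apply/allP => r /mapP [a ha ->]; apply: bpoly_root; first exact: memS.
  by move: ha; rewrite mem_filter => /andP[].
- rewrite size_map size_filter count_sum_nat.
  have := count_a h1 h2; rewrite /index_iota subn1 => ->.
  exact: bpoly_size.
- exact: bpoly_at0.
Qed.

Lemma part1 : \prod_(1 <= s < p.-1) bpoly p 1 s
    = \prod_(2 <= k < p) (1 + ((k%:R : F)^-1) *: 'X) ^+ k.-1.
Proof.
have hp0 := prime_gt0 hp.
rewrite (eq_big_nat _ _ (F2 := fun s => \prod_(1 <= a < p | (a + mm s a < p)%N)
           (1 - (a%:R : F)^-1 *: 'X))); last first.
  move=> s /andP[h1 h2]; rewrite bpoly_fact // /Sset big_filter /index_iota subn1 //.
rewrite (eq_bigr (fun s => \prod_(1 <= a < p) (if (a + mm s a < p)%N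
           then (1 - (a%:R : F)^-1 *: 'X) else 1))); last by move=> s _; rewrite big_mkcond.
rewrite exchange_big /=.
rewrite (eq_big_nat _ _ (F2 := fun a => (1 - (a%:R : F)^-1 *: 'X) ^+ (p.-1 - a))); last first.
  move=> a ha; rewrite -big_mkcond /= big_const_seq iter_mulr_1; congr (_ ^+ _).
  by rewrite count_sum_nat count_s.
rewrite big_nat_rev /=.
rewrite (eq_big_nat _ _ (F2 := fun i => (1 + ((i%:R : F)^-1) *: 'X) ^+ i.-1)); last first.
  move=> i /andP[h1 h2]; have -> : (1 + p - i.+1 = p - i)%N by lia.
  rewrite natFpB; last by lia.
  rewrite invrN scaleNr opprK; congr (_ ^+ _); lia.
by rewrite big_ltn ?expr0 ?mul1r //; have := prime_gt1 hp; lia.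
Qed.


Definition Rl : P := laguerre ('X ^+ p) ('X ^+ p - 'X).

Definition Bn n := (n + (p - 2) * n./2)%N.

Lemma size_Rl : (size Rl <= (Bn p.-1).+1)%N.
Proof.
have hp0 := prime_gt0 hp; have hp1 := prime_gt1 hp.
set b : P := 'X ^+ p - 1.
set g : P := - ('X ^+ p - 'X).
set G := Eb b 1 * Ex g.
have Gp : G`_p.-1 = Rl.
  rewrite /G coefMr /Rl /laguerre prednK //; apply: eq_bigr => j _; rewrite !coef_poly.
  have -> : (p.-1 - j < p)%N by lia.
  have -> : (j < p)%N by exact: ltn_ord.
  by rewrite expr1n scale1r.
have ode : eqm ((1 + ((1 : P))%:P * 'X + ((0 : P))%:P * 'X^2) * G^`())
     (((b + g)%:P + g%:P * 'X) * G).
  have e1 := eqm_mulr (Ex g) (Eb_ode b 1).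
  have e2 := eqm_mulr ((1 + (1%:P)%:P * 'X) * Eb b 1) (Ex_ode g).
  have e3 := eqm_add e1 e2.
  move=> n hn.
  have -> : (1 + ((1 : P))%:P * 'X + ((0 : P))%:P * 'X^2) * G^`() =
     (1 + (1%:P)%:P * 'X) * (Eb b 1)^`() * Ex g +
     (Ex g)^`() * ((1 + (1%:P)%:P * 'X) * Eb b 1).
    rewrite /G derivM; ring.
  rewrite e3 //; apply: (congr1 (fun q : {poly P} => q`_n)); rewrite /G; ring.
have [r1 r2] := rec_from_eqm ode.
have hc : b + g = (1 : F) *: 'X - 1 by rewrite /b /g scale1r; ring.
have sc : (size (b + g)%R <= 2)%N by rewrite hc size_lin2.
have sd : (size g <= p.+1)%N.
  rewrite /g size_polyN; apply: size_sub_le; first by rewrite size_polyXn.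
  by rewrite size_polyX.
have g0 : G`_0 = 1 by rewrite /G coef0M !coef_poly hp0 !expr0 !scale1r pbinom0 mul1r fact0 invr1 scale1r.
have := @size_rec (fun n => G`_n) 1 0 (b + g) g Bn 1 p (size_polyC_leq1 _) (size_polyC_leq1 _)
  sc sd.
rewrite g0 size_poly1 => /(_ isT); rewrite -{1}g0 => /(_ r1 r2).
have hB n : (Bn n.+2 = Bn n + p)%N.
  rewrite /Bn (_ : n.+2./2 = (n./2).+1)%N // mulnS; lia.
have hBm n : (Bn n <= Bn n.+1)%N.
  rewrite /Bn; have := half_leq (leqnSn n); have := leq_mul2l (p - 2) n./2 n.+1./2.
  move=> e h; rewrite h orbT in e; lia.
have hBs n : (Bn n.+1 + 1 <= Bn n + p)%N.
  rewrite /Bn; have h : (n.+1./2 <= (n./2).+1)%N.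
    by rewrite -[X in (_ <= X)%N]/(n.+2./2) half_leq.
  have := leq_mul2l (p - 2) n.+1./2 (n./2).+1; rewrite h orbT mulnS => e; lia.
move=> /(_ _ _ _ _ _ p.-1); rewrite Gp; apply => //.
- by move=> n; rewrite hB; have := hBs n; lia.
- by move=> n; rewrite hB; lia.
- by move=> n; rewrite hB; lia.
- lia.
Qed.

Lemma sign_pm1 : (-1 : F) ^+ p.-1 = 1.
Proof.
have hp0 := prime_gt0 hp.
have : ~~ odd p.-1 by move: hodd; case: p hp0 => // n _ /=; rewrite negbK.
by move=> ho; rewrite -signr_odd (negbTE ho).
Qed.

Lemma pbinom_at (x : P) (a : F) m : (m < p)%N -> x.[a] = -1 -> (pbinom x m).[a] = (-1) ^+ m.
Proof.
move=> hm hx; rewrite pbinom_horner hx prod_m1 mulrCA mulVf ?mulr1 //; exact: fact_neq0.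
Qed.

Lemma Rl_at0 : Rl.[0] = 1.
Proof.
have hp0 := prime_gt0 hp.
rewrite /Rl /laguerre horner_sum (bigD1 (Ordinal hp0)) //= big1 ?addr0.
  rewrite hornerM pbinom_at ?subn0 ?sign_pm1; last 2 first.
  - by rewrite -ltnS prednK.
  - by rewrite hornerD hornerN hornerXn expr0n /= hornerC eqn0Ngt hp0 /= sub0r.
  by rewrite expr0 fact0 invr1 scale1r hornerC mul1r.
move=> i hi; rewrite hornerM [X in _ * X]hornerZ horner_exp hornerN hornerD hornerN hornerXn hornerX.
rewrite expr0n /= eqn0Ngt hp0 /= subrr oppr0 expr0n.
have -> : (i == 0 :> nat) = false.
  by apply/negbTE; apply: contra hi => /eqP h; apply/eqP; apply: val_inj.
by rewrite mulr0 mulr0.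
Qed.

Lemma comp_poly_exp (f q : P) n : (f ^+ n) \Po q = (f \Po q) ^+ n.
Proof.
elim: n => [|n IH]; first by rewrite !expr0 -polyC1 comp_polyC.
by rewrite !exprS comp_polyM IH.
Qed.

Lemma frobX (z : F) : ('X + z%:P : P) ^+ p = 'X ^+ p + z%:P.
Proof.
rewrite exprDn_pchar; last by rewrite pnatE // pchar_poly pchar_Fp.
by rewrite -polyC_exp fermatF.
Qed.

Lemma Xp_split : ('X ^+ p : P) = 'X * 'X ^+ p.-1.
Proof. by rewrite -exprS prednK // prime_gt0. Qed.

Lemma comp_prod (q : P) n (G : 'I_n -> P) :
  (\prod_(i < n) G i) \Po q = \prod_(i < n) (G i \Po q).
Proof.
apply: (big_morph (fun f : P => f \Po q)); first by move=> x y; rewrite comp_polyM.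
by rewrite -polyC1 comp_polyC.
Qed.

Lemma comp_sum (q : P) n (G : 'I_n -> P) :
  (\sum_(i < n) G i) \Po q = \sum_(i < n) (G i \Po q).
Proof.
apply: (big_morph (fun f : P => f \Po q)); first by move=> x y; rewrite comp_polyD.
by rewrite comp_poly0.
Qed.

Lemma comp_polyN' (f q : P) : (- f) \Po q = - (f \Po q).
Proof. by rewrite -sub0r comp_polyB comp_poly0 sub0r. Qed.

Lemma Rl_dvd c : (1 <= c < p)%N -> ('X - (c%:R : F)%:P) ^+ (p - c) %| Rl.
Proof.
move=> hc; have hp0 := prime_gt0 hp.
set z := (c%:R : F); set s : P := 'X + z%:P.
have hsx : ('X ^+ p) \Po s = 'X ^+ p + z%:P by rewrite comp_poly_exp comp_polyX frobX.
have hu : ('X ^+ p - 'X) \Po s = 'X ^+ p - 'X.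
  by rewrite comp_polyB hsx comp_polyX opprD addrACA subrr addr0.
have key : 'X ^+ (p - c) %| Rl \Po s.
  rewrite /Rl /laguerre comp_sum.
  apply: (big_ind (fun f => 'X ^+ (p - c) %| f)); [exact: dvdp0 | exact: dvdp_add |].
  move=> k _; rewrite comp_polyM [X in _ * X]comp_polyZ comp_poly_exp comp_polyN' hu.
  case: (ltnP k (p - c)) => hk.
    apply: dvdp_mulr; apply: dvdp_trans (dvdp_exp2l 'X (leq_subr c p)) _.
    rewrite /pbinom comp_polyZ comp_prod -mul_polyC; apply: dvdp_mull.
    have hi : (c.-1 < p.-1 - k)%N by lia.
    rewrite (bigD1 (Ordinal hi)) //=; apply: dvdp_mulr.
    rewrite !comp_polyB hsx !comp_polyC.
    have -> : (c.-1)%:R = z - 1 by rewrite /z -[in c%:R](prednK (n := c)) ?natr1 -?natr1 ?addrK //; lia.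
    by rewrite rmorphB /= polyC1 (_ : forall a b d : P, a + b - d - (b - d) = a) ?dvdpp //; move=> *; ring.
  apply: dvdp_mull; rewrite -mul_polyC; apply: dvdp_mull.
  have -> : - ('X ^+ p - 'X) = 'X * (1 - 'X ^+ p.-1) :> P.
    by rewrite Xp_split; move: ('X ^+ p.-1) => Y; ring.
  by rewrite exprMn; apply: dvdp_mulr; apply: dvdp_exp2l.
have E : Rl = ((Rl \Po s) %/ 'X ^+ (p - c) \Po ('X - z%:P)) * ('X - z%:P) ^+ (p - c).
  rewrite -{1}(comp_polyXaddC_K Rl z) -/s -{1}(divpK key) comp_polyM comp_poly_exp comp_polyX //.
by rewrite E dvdp_mull.
Qed.

Definition L2 : P := (1 - 'X ^+ p.-1) * \prod_(2 <= k < p) (1 + ((k%:R : F)^-1) *: 'X) ^+ k.-1.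

Lemma prod12 : \prod_(2 <= k < p) (1 + ((k%:R : F)^-1) *: 'X) ^+ k.-1 =
               \prod_(1 <= k < p) (1 + ((k%:R : F)^-1) *: 'X) ^+ k.-1.
Proof. by rewrite [RHS]big_ltn ?expr0 ?mul1r // prime_gt1. Qed.

Lemma fermat1 (z : F) : z != 0 -> z ^+ p.-1 = 1.
Proof.
move=> hz; apply: (mulIf hz); rewrite mul1r -exprSr prednK ?fermatF //.
exact: prime_gt0.
Qed.

Lemma L2_dvd c : (1 <= c < p)%N -> ('X - (c%:R : F)%:P) ^+ (p - c) %| L2.
Proof.
move=> hc; set z := (c%:R : F).
have hz : z != 0 by apply: natFp_neq0.
rewrite /L2 prod12 (bigD1_seq (p - c)%N) /=; last by rewrite iota_uniq.
  2: by rewrite mem_index_iota; lia.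
have -> : (p - c = (p - c).-1.+1)%N by lia.
rewrite exprS mulrA; apply: dvdp_mulr; apply: dvdp_mul.
  rewrite dvdp_XsubCl /root hornerD hornerN hornerXn hornerC fermat1 // subrr //.
apply: dvdp_exp2r; rewrite dvdp_XsubCl /root hornerD hornerZ hornerX hornerC.
rewrite prednK; last by lia.
by rewrite natFpB ?invrN ?mulNr ?mulVf ?subrr //; lia.
Qed.

Lemma L2_at0 : L2.[0] = 1.
Proof.
rewrite /L2 hornerM horner_prod big1_seq ?mulr1.
  rewrite hornerD hornerN hornerXn hornerC expr0n.
  by have := prime_gt1 hp; case: p => [|[|n]] //= _; rewrite subr0.
move=> k _; rewrite horner_exp hornerD hornerZ hornerX hornerC mulr0 addr0 expr1n //.
Qed.

Lemma size_exp_le (q : P) n m : (size q <= m.+1)%N -> (size (q ^+ n) <= (m * n).+1)%N.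
Proof.
move=> hq; have := size_exp q n.
case: (size (q ^+ n)) => [|k] //= ->; rewrite ltnS leq_mul2r; apply/orP; right.
by rewrite -ltnS; case: (size q) hq.
Qed.

Lemma size_prod_le (l : seq nat) (G : nat -> P) (w : nat -> nat) :
  (forall k, (size (G k) <= (w k).+1)%N) ->
  (size (\prod_(k <- l) G k)%R <= (\sum_(k <- l) w k).+1)%N.
Proof.
move=> hw; elim: l => [|k l IH]; first by rewrite !big_nil size_poly1.
rewrite !big_cons; apply: leq_trans (size_mul_le (hw k) IH) _; by [].
Qed.

Definition NN := (\sum_(1 <= k < p) k)%N.

Lemma size_L2 : (size L2 <= NN.+1)%N.
Proof.
have hp1 := prime_gt1 hp.
rewrite /L2 prod12.
have h1 : (size (1 - 'X ^+ p.-1 : P)%R <= (p.-1).+1)%N.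
  by apply: size_sub_le; rewrite ?size_poly1 ?size_polyXn //.
have h2 := @size_prod_le (index_iota 1 p)
  (fun k => (1 + ((k%:R : F)^-1) *: 'X) ^+ k.-1) (fun k => k.-1)%N.
have h2' : (size (\prod_(1 <= k < p) (1 + ((k%:R : F)^-1) *: 'X) ^+ k.-1)%R
     <= (\sum_(1 <= k < p) k.-1).+1)%N.
  apply: h2 => k; rewrite -[X in (_ <= X.+1)%N]mul1n; apply: size_exp_le.
  apply: size_add_le; first by rewrite size_poly1.
  by apply: leq_trans (size_scale_leq _ _) _; rewrite size_polyX.
apply: leq_trans (size_mul_le h1 h2') _.
have : (\sum_(1 <= k < p) k = \sum_(1 <= k < p) k.-1 + \sum_(1 <= k < p) 1)%N.
  rewrite -big_split /=; apply: eq_big_nat => k hk; lia.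
rewrite sum_nat_const_nat muln1 /NN => ->; lia.
Qed.

Definition DD : P := \prod_(c <- index_iota 1 p) ('X - (c%:R : F)%:P) ^+ (p - c).

Lemma size_DD : size DD = NN.+1.
Proof.
have hp1 := prime_gt1 hp.
rewrite /DD size_prod_seq; last by move=> c _; rewrite expf_neq0 // polyXsubC_eq0.
under eq_bigr do rewrite size_exp_XsubC.
have -> : (\sum_(i <- index_iota 1 p) (p - i).+1 = \sum_(1 <= i < p) (p - i) + \sum_(1 <= i < p) 1)%N.
  by rewrite -big_split /=; apply: eq_bigr => i _; rewrite addn1.
rewrite sum_nat_const_nat muln1 size_iota.
have -> : (\sum_(1 <= i < p) (p - i) = NN)%N.
  rewrite big_nat_rev /NN; apply: eq_big_nat => i hi; lia.
lia.
Qed.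

Lemma NN_Bn : Bn p.-1 = NN.
Proof.
have hp1 := prime_gt1 hp.
rewrite /NN.
have -> : (\sum_(1 <= i < p) i = \sum_(0 <= i < p) i)%N by rewrite [RHS]big_ltn ?prime_gt0.
rewrite bin2_sum bin2 /Bn.
have := odd_double_half p; rewrite hodd add1n => E.
set h := p./2 in E *.
have -> : p.-1 = h.*2 by rewrite -E.
rewrite doubleK -doubleMr doubleK -E -!muln2; nia.
Qed.

Lemma dvd_prod_roots (f : P) (l : seq nat) (m : nat -> nat) : uniq l ->
  (forall c, c \in l -> (0 < c < p)%N) ->
  (forall c, c \in l -> ('X - (c%:R : F)%:P) ^+ (m c) %| f) ->
  \prod_(c <- l) ('X - (c%:R : F)%:P) ^+ (m c) %| f.
Proof.
elim: l => [|c l IH] /=; first by rewrite big_nil dvd1p.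
move=> /andP[cl ul] hl hd; rewrite big_cons Gauss_dvdp.
  rewrite hd ?mem_head //= IH // => [d hd'|d hd']; [apply: hl | apply: hd];
    by rewrite in_cons hd' orbT.
apply: coprimep_expl; rewrite coprimep_sym coprimep_XsubC /root horner_prod.
rewrite prodf_seq_neq0; apply/allP => d hd'; rewrite horner_exp expf_neq0 //.
rewrite hornerD hornerN hornerX hornerC subr_eq0; apply/eqP => /natFp_inj.
have := hl c (mem_head _ _); have := hl d; rewrite in_cons hd' orbT => /(_ isT).
move=> h1 h2 /(_ _ _) H.
have e : c = d by apply: H; lia.
by move: cl; rewrite e hd'.
Qed.

Lemma DD_dvd (f : P) : (forall c, (1 <= c < p)%N -> ('X - (c%:R : F)%:P) ^+ (p - c) %| f) ->
  DD %| f.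
Proof.
move=> H; apply: dvd_prod_roots; first exact: iota_uniq.
  by move=> c; rewrite mem_index_iota.
by move=> c; rewrite mem_index_iota => /H.
Qed.

Lemma mult_const (D f : P) : D != 0 -> D %| f -> (size f <= size D)%N ->
  f = (f %/ D)`_0 *: D.
Proof.
move=> hD hdf hs.
have hq : (size (f %/ D)%R <= 1)%N.
  rewrite size_divp //; have := size_poly_gt0 D; rewrite hD /=.
  by case: (size D) hs => //= n hs _; rewrite leq_subLR addn1.
by rewrite -mul_polyC -(size1_polyC hq) divpK.
Qed.

Lemma part2 : L2 = Rl.
Proof.
have hD : DD != 0 by rewrite -size_poly_eq0 size_DD.
have s1 : (size L2 <= size DD)%N by rewrite size_DD size_L2.
have s2 : (size Rl <= size DD)%N by rewrite size_DD -NN_Bn size_Rl.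
have e1 := mult_const hD (DD_dvd L2_dvd) s1.
have e2 := mult_const hD (DD_dvd Rl_dvd) s2.
have h1 := L2_at0; have h2 := Rl_at0.
rewrite e1 hornerZ in h1; rewrite e2 hornerZ in h2.
rewrite e1 e2; congr (_ *: _).
have hD0 : DD.[0] != 0 by apply: contra_eq_neq h1 => ->; rewrite mulr0 eq_sym oner_neq0.
by apply: (mulIf hD0); rewrite h1 h2.
Qed.

End P16.

Theorem corollary16 (p : nat) (hp : prime p) (hodd : odd p) :
  \prod_(1 <= s < p.-1) bpoly p 1 s
    = \prod_(2 <= k < p) (1 + ((k%:R : 'F_p)^-1) *: 'X) ^+ k.-1
  /\ (1 - 'X ^+ p.-1) * \prod_(1 <= s < p.-1) bpoly p 1 s
    = laguerre ('X ^+ p) ('X ^+ p - 'X).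
Proof.
split; first exact: part1.
rewrite part1 //; exact: part2.
Qed.
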